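(* Let $\nu$ be a Borel probability measure on $\operatorname{Hom}(\mathbb{S}^1)$ and let $\nu^-$ be the image of $\nu$ under $f\mapsto f^{-1}$. Assume that $\Gamma_\nu$ is proximal and does not fix any point in $\mathbb{S}^1$. Then $\Gamma_{\nu^-}$ is also proximal and does not fix any point in $\mathbb{S}^1$.
   Context: $\mathbb{S}^1=\mathbb{R}/\mathbb{Z}$ with usual metric $d$; $\operatorname{Hom}(\mathbb{S}^1)$ is the group of all homeomorphisms of $\mathbb{S}^1$. For a probability measure $\mu$ on $\operatorname{Hom}(\mathbb{S}^1)$, $X_\mu$ is its topological support and $\Gamma_\mu$ the semigroup generated by $X_\mu$. $\Gamma_\mu$ is proximal if for all $x,y$ there exists $(g_n)$ in $\Gamma_\mu$ with $d(g_n(x),g_n(y))\to0$; it does not fix any point if no $x$ satisfies $f(x)=x$ for all $f\in\Gamma_\mu$. Here $\nu^-(A)=\nu(\{f: f^{-1}\in A\})$. *)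

(* Defs.v *)
From HB Require Import structures.
From mathcomp Require Import all_boot all_order all_algebra.
From mathcomp Require Import all_classical all_reals all_analysis.
From mathcomp Require Import Rstruct Rstruct_topology.
From Stdlib Require Import Rdefinitions.
Set Implicit Arguments. Unset Strict Implicit. Unset Printing Implicit Defensive.
Import Order.TTheory GRing.Theory Num.Theory.
Local Open Scope classical_set_scope.
Local Open Scope ring_scope.

(* The circle S^1 = R/Z, represented by the fundamental domain [0,1). *)
Definition S1 : Type := {x : R | (0 <= x) && (x < 1)}.

(* Usual metric on R/Z : distance of x - y to the nearest integer. *)
Definition dS (x y : S1) : R :=
  let t := sval x - sval y - (Num.floor (sval x - sval y))%:~R in
  Num.min t (1 - t).

Definition S1_continuous (f : S1 -> S1) : Prop :=
  forall (x : S1) (e : R), 0 < e ->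
    exists2 dl : R, 0 < dl & forall y : S1, dS x y < dl -> dS (f x) (f y) < e.

Record Hom := MkHom {
  hfun : S1 -> S1;
  hinv : S1 -> S1;
  hfunK : cancel hfun hinv;
  hinvK : cancel hinv hfun;
  hfun_cont : S1_continuous hfun;
  hinv_cont : S1_continuous hinv }.

Definition Hom_id : Hom :=
  @MkHom id id (fun _ => erefl) (fun _ => erefl)
    (fun x e e0 => ex_intro2 _ _ e e0 (fun _ h => h))
    (fun x e e0 => ex_intro2 _ _ e e0 (fun _ h => h)).

Definition Hom_inverse (f : Hom) : Hom :=
  @MkHom (hinv f) (hfun f) (hinvK f) (hfunK f) (hinv_cont f) (hfun_cont f).

HB.instance Definition _ := gen_eqMixin Hom.
HB.instance Definition _ := gen_choiceMixin Hom.
HB.instance Definition _ := isPointed.Build Hom Hom_id.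

(* Uniform metric on Hom(S^1) (topology of uniform convergence of f and f^-1,
   i.e. the usual compact-open topology of Hom(S^1)). *)
Definition dH (f g : Hom) : R :=
  sup (range (fun x => dS (hfun f x) (hfun g x))) +
  sup (range (fun x => dS (hinv f x) (hinv g x))).

Definition Hom_ball (f : Hom) (e : R) : set Hom := [set g | dH f g < e].

Definition Hom_open (A : set Hom) : Prop :=
  forall f, A f -> exists2 e : R, 0 < e & Hom_ball f e `<=` A.

Definition HomB : measurableType _ := g_sigma_algebraType Hom_open.

(* Topological support of a measure: points all of whose neighbourhoods
   (equivalently, all open balls around them) have positive measure. *)
Definition top_support (nu : {measure set HomB -> \bar R}) : set Hom :=
  [set f | forall e : R, 0 < e -> (0 < nu (Hom_ball f e))%E].

Inductive gen_semigroup (X : set Hom) : (S1 -> S1) -> Prop :=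
  | gs_gen f : X f -> gen_semigroup X (hfun f)
  | gs_comp g h : gen_semigroup X g -> gen_semigroup X h ->
                  gen_semigroup X (g \o h).

Definition proximal (G : (S1 -> S1) -> Prop) : Prop :=
  forall x y : S1, exists g : nat -> (S1 -> S1),
    (forall n, G (g n)) /\
    (fun n => dS (g n x) (g n y)) @ \oo --> (0 : R).

Definition fixes_no_point (G : (S1 -> S1) -> Prop) : Prop :=
  ~ exists x : S1, forall f, G f -> f x = x.

(* Main.v *)
Require Import Defs.
From HB Require Import structures.
From mathcomp Require Import all_boot all_order all_algebra.
From mathcomp Require Import all_classical all_reals all_analysis.
From mathcomp Require Import Rstruct Rstruct_topology.
From mathcomp Require Import lra ring.
From Stdlib Require Import Rdefinitions Classical_Prop.
Set Implicit Arguments. Unset Strict Implicit. Unset Printing Implicit Defensive.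
Import Order.TTheory GRing.Theory Num.Theory.
Local Open Scope classical_set_scope.
Local Open Scope ring_scope.


Lemma S1_ge0 (x : S1) : 0 <= sval x.
Proof. by case: x => v /= /andP[]. Qed.
Lemma S1_lt1 (x : S1) : sval x < 1.
Proof. by case: x => v /= /andP[]. Qed.

Definition m1 (t : R) : R := Num.min `|t| (1 - `|t|).
Arguments m1 t%_ring_scope.

Lemma dSE (x y : S1) : dS x y = m1 (sval x - sval y).
Proof.
rewrite /dS /m1.
have h0 := S1_ge0 x; have h1 := S1_lt1 x; have h2 := S1_ge0 y; have h3 := S1_lt1 y.
case: (leP 0 (sval x - sval y)) => hd.
  have -> : Num.floor (sval x - sval y) = 0.
    apply: floor_def; rewrite add0r /=; apply/andP; split => //; lra.
  by rewrite ger0_norm // subr0.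
have e1 : ((-1 : int)%:~R : R) = -1 by rewrite rmorphN1.
have -> : Num.floor (sval x - sval y) = -1.
  apply: floor_def; rewrite e1 addNr /=; apply/andP; split.
  lra. lra.
rewrite ltr0_norm // e1.
rewrite minC; congr Num.min.
ring. ring.
Qed.

Lemma m1P (t : R) :
  (0 <= t /\ (m1 t = t \/ m1 t = 1 - t) /\ m1 t <= t /\ m1 t <= 1 - t) \/
  (t < 0 /\ (m1 t = - t \/ m1 t = 1 + t) /\ m1 t <= - t /\ m1 t <= 1 + t).
Proof.
rewrite /m1; case: (leP 0 t) => ht.
  left; rewrite ger0_norm //; split => //; split; last by split; rewrite ge_min lexx ?orbT.
  by rewrite /Num.min; case: ifP; [left|right].
right; rewrite ltr0_norm // opprK; split => //; split.
  by rewrite /Num.min; case: ifP; [left|right].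
by split; rewrite ge_min lexx ?orbT.
Qed.

Ltac m1_cases t := let H := fresh "Hm" in
  have H := m1P t; case: H => [[? [[?|?] [? ?]]]|[? [[?|?] [? ?]]]].

Lemma dS_sym x y : dS x y = dS y x.
Proof.
rewrite !dSE; have := S1_ge0 x; have := S1_lt1 x; have := S1_ge0 y; have := S1_lt1 y.
move=> *; m1_cases (sval x - sval y); m1_cases (sval y - sval x); lra.
Qed.

Lemma dS_ge0 x y : 0 <= dS x y.
Proof.
rewrite !dSE; have := S1_ge0 x; have := S1_lt1 x; have := S1_ge0 y; have := S1_lt1 y.
move=> *; m1_cases (sval x - sval y); lra.
Qed.

Lemma dS_le_half x y : dS x y <= 1/2.
Proof.
rewrite !dSE; have := S1_ge0 x; have := S1_lt1 x; have := S1_ge0 y; have := S1_lt1 y.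
move=> *; m1_cases (sval x - sval y); lra.
Qed.

Lemma dS_xx x : dS x x = 0.
Proof.
rewrite !dSE; have := S1_ge0 x; have := S1_lt1 x.
move=> *; m1_cases (sval x - sval x); lra.
Qed.

Lemma dS_eq0 x y : dS x y = 0 -> x = y.
Proof.
rewrite !dSE; have := S1_ge0 x; have := S1_lt1 x; have := S1_ge0 y; have := S1_lt1 y.
move=> *; apply: val_inj => /=.
m1_cases (sval x - sval y); lra.
Qed.

Lemma dS_le_abs x y : dS x y <= `|sval x - sval y|.
Proof.
rewrite !dSE; have := S1_ge0 x; have := S1_lt1 x; have := S1_ge0 y; have := S1_lt1 y.
move=> *; case: (leP 0 (sval x - sval y)) => ?;
 [rewrite ger0_norm // | rewrite ltr0_norm //]; m1_cases (sval x - sval y); lra.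
Qed.

Definition co (b z : S1) : R :=
  if sval b <= sval z then sval z - sval b else sval z - sval b + 1.

Lemma co_ge0 b z : 0 <= co b z.
Proof.
have := S1_ge0 b; have := S1_lt1 b; have := S1_ge0 z; have := S1_lt1 z.
rewrite /co; case: ifP => /= h *; [move: h => /idP h|move: h => /negbT; rewrite -ltNge => h]; lra.
Qed.

Lemma co_lt1 b z : co b z < 1.
Proof.
have := S1_ge0 b; have := S1_lt1 b; have := S1_ge0 z; have := S1_lt1 z.
rewrite /co; case: ifP => /= h *; [move: h => /idP h|move: h => /negbT; rewrite -ltNge => h]; lra.
Qed.

Lemma m1N t : m1 (- t) = m1 t.
Proof. by rewrite /m1 normrN. Qed.

Lemma m1_shift1 t : -1 < t < 0 -> m1 (t + 1) = m1 t.
Proof.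
move=> /andP[h1 h2]; have h3 : 0 <= t + 1 by lra.
rewrite /m1 (ltr0_norm h2) (ger0_norm h3).
rewrite minC; congr Num.min; ring.
Qed.

Lemma m1_shiftN1 t : 0 <= t < 1 -> m1 (t - 1) = m1 t.
Proof.
move=> /andP[h1 h2]; rewrite -m1N -(m1N t).
have -> : - (t - 1) = - t + 1 by ring.
case: (eqVneq t 0) => [->|tn0]; first by rewrite oppr0 add0r /m1 normr1 normr0 subr0 subrr minC.
apply: m1_shift1; apply/andP; split; lra.
Qed.

Lemma dS_co b z z' : dS z z' = m1 (co b z - co b z').
Proof.
rewrite dSE.
have := S1_ge0 b; have := S1_lt1 b; have := S1_ge0 z; have := S1_lt1 z.
have := S1_ge0 z'; have := S1_lt1 z'.
rewrite /co; case: ifP => /= h; [move: h => /idP h|move: h => /negbT; rewrite -ltNge => h];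
case: ifP => /= h'; [move: h' => /idP h'|move: h' => /negbT; rewrite -ltNge => h'|
  move: h' => /idP h'|move: h' => /negbT; rewrite -ltNge => h'] => *.
- congr m1; ring.
- have -> : sval z - sval b - (sval z' - sval b + 1) = (sval z - sval z') - 1 by ring.
  rewrite m1_shiftN1 //; apply/andP; split; lra.
- have -> : sval z - sval b + 1 - (sval z' - sval b) = (sval z - sval z') + 1 by ring.
  rewrite m1_shift1 //; apply/andP; split; lra.
- congr m1; ring.
Qed.

Lemma co_bb b : co b b = 0.
Proof. by rewrite /co lexx subrr. Qed.


Lemma dS_bz b z : dS b z = m1 (co b z).
Proof. by rewrite (dS_co b) co_bb sub0r m1N. Qed.

Lemma co_inj b z z' : co b z = co b z' -> z = z'.
Proof.
move=> e; apply: dS_eq0; by rewrite (dS_co b) e subrr /m1 normr0 subr0 /Num.min ltr01.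
Qed.


Lemma m1P0 (t : R) : 0 <= t ->
  (m1 t = t \/ m1 t = 1 - t) /\ m1 t <= t /\ m1 t <= 1 - t.
Proof.
move=> ht; rewrite /m1 ger0_norm //; split; last by split; rewrite ge_min lexx ?orbT.
by rewrite /Num.min; case: ifP; [left|right].
Qed.

Lemma dS_triangle x y z : dS x z <= dS x y + dS y z.
Proof.
rewrite (dS_co y x z) (dS_co y x y) (dS_co y y z) co_bb subr0 sub0r m1N.
have := co_ge0 y x; have := co_lt1 y x; have := co_ge0 y z; have := co_lt1 y z.
move=> h1 h2 h3 h4.
have [[e1|e1] [f1 g1]] := m1P0 h4; have [[e2|e2] [f2 g2]] := m1P0 h2;
m1_cases (co y x - co y z); lra.
Qed.

Definition pt (b : S1) (t : R) : S1 :=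
  insubd b (if sval b + t < 1 then sval b + t else sval b + t - 1).

Lemma pt_val b t : 0 <= t < 1 ->
  sval (pt b t) = if sval b + t < 1 then sval b + t else sval b + t - 1.
Proof.
move=> /andP[t0 t1]; rewrite /pt val_insubd.
have := S1_ge0 b; have := S1_lt1 b => *.
case: (ltP (sval b + t) 1) => h; rewrite ifT //; apply/andP; split; lra.
Qed.

Lemma co_pt b t : 0 <= t < 1 -> co b (pt b t) = t.
Proof.
move=> ht; have := ht => /andP[t0 t1]; rewrite /co pt_val //.
have := S1_ge0 b; have := S1_lt1 b => *.
case: (ltP (sval b + t) 1) => h.
  rewrite ifT; [ring|lra].
rewrite ifF; [ring|]; apply/negbTE; rewrite -ltNge; lra.
Qed.

Lemma pt_co b z : pt b (co b z) = z.
Proof.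
apply: (@co_inj b); rewrite co_pt //; apply/andP; split; [exact: co_ge0|exact: co_lt1].
Qed.

Lemma m1_le_abs t : m1 t <= `|t|.
Proof. by rewrite /m1 ge_min lexx. Qed.

Lemma dS_pt b t t' : 0 <= t < 1 -> 0 <= t' < 1 -> dS (pt b t) (pt b t') <= `|t - t'|.
Proof. by move=> h h'; rewrite (dS_co b) !co_pt // m1_le_abs. Qed.

Lemma co_cont p z0 z eta : 0 < eta -> eta <= co p z0 -> eta <= 1 - co p z0 ->
  dS z0 z < eta -> `|co p z0 - co p z| < eta.
Proof.
move=> e0 h1 h2; rewrite (dS_co p).
have := co_ge0 p z; have := co_lt1 p z => *.
case: (leP 0 (co p z0 - co p z)) => hs;
  [rewrite ger0_norm //|rewrite ltr0_norm //]; m1_cases (co p z0 - co p z); lra.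
Qed.

Definition s0 : S1.
Proof. exists 0; by rewrite lexx ltr01. Defined.

Definition gp (N i : nat) : S1 := insubd s0 (i%:R / N%:R).
Definition grid (N : nat) : seq S1 := map (gp N) (iota 0 N).

Lemma In_map_iota (T : Type) (f : nat -> T) (m n i : nat) :
  ((m <= i)%nat && (i < m + n)%nat) -> List.In (f i) (map f (iota m n)).
Proof.
elim: n m => [|n IH] m; first by rewrite addn0 => /andP[a b]; move: (leq_ltn_trans a b); rewrite ltnn.
rewrite /= => /andP[a b]; case: (eqVneq m i) => [->|mi]; first by left.
right; apply: IH; rewrite addSnnS b andbT; by rewrite ltn_neqAle mi a.
Qed.

Lemma In_grid N i : (i < N)%nat -> List.In (gp N i) (grid N).
Proof. by move=> h; apply: In_map_iota; rewrite add0n h. Qed.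

Lemma gp_val N i : (i < N)%nat -> sval (gp N i) = i%:R / N%:R.
Proof.
move=> h; rewrite /gp val_insubd ifT //.
have N0 : (0 < N%:R :> R) by rewrite ltr0n; case: N h => //.
apply/andP; split; first by rewrite divr_ge0 // ler0n.
by rewrite ltr_pdivrMr // mul1r ltr_nat.
Qed.

Lemma co_ge p z : sval p <= sval z -> co p z = sval z - sval p.
Proof. by move=> h; rewrite /co h. Qed.
Lemma co_lt p z : sval z < sval p -> co p z = sval z - sval p + 1.
Proof. by move=> h; rewrite /co leNgt h. Qed.

Lemma grid_sep_ord N eps u v : 0 < eps -> (0 < N)%nat -> 1 < N%:R * eps ->
  eps <= dS u v -> sval u < sval v ->
  exists p q, List.In p (grid N) /\ List.In q (grid N) /\
    (co p u < co p q < co p v).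
Proof.
move=> e0 N0 Ne huv uv.
have := S1_ge0 u; have := S1_lt1 u; have := S1_ge0 v; have := S1_lt1 v => *.
have [h1 h2] : eps <= sval v - sval u /\ eps <= 1 - (sval v - sval u).
  move: huv; rewrite dSE; m1_cases (sval u - sval v) => *; split; lra.
have NR : (0 < N%:R :> R) by rewrite ltr0n.
pose r : R := N%:R^-1.
have r0 : 0 < r by rewrite invr_gt0.
have Nr : N%:R * r = 1 by rewrite /r mulfV // gt_eqF.
have rr : forall i : nat, (i < N)%nat -> sval (gp N i) = i%:R * r.
  by move=> i hi; rewrite gp_val.
have re : r < eps.
  have : 1 * r < N%:R * eps * r by rewrite ltr_pM2r.
  by rewrite mul1r mulrAC Nr mul1r.
pose k := Num.truncn (sval u * N%:R).
have [hk1 hk2] : k%:R <= sval u * N%:R /\ sval u * N%:R < k.+1%:R.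
  by have /andP[] := Num.Theory.truncn_itv (mulr_ge0 (S1_ge0 u) (ltW NR)).
have kq1 : sval u < k.+1%:R * r.
  have : sval u * N%:R * r < k.+1%:R * r by rewrite ltr_pM2r.
  by rewrite -mulrA Nr mulr1.
have kq2 : k.+1%:R * r <= sval u + r.
  have : k%:R * r <= sval u * N%:R * r by rewrite ler_pM2r.
  rewrite -mulrA Nr mulr1 => h; rewrite -addn1 natrD mulrDl mul1r; lra.
have kN : (k.+1 < N)%nat.
  have h : k.+1%:R * r < N%:R * r by rewrite Nr; lra.
  by move: h; rewrite ltr_pM2r // ltr_nat.
exists (if 0 < sval u then gp N 0 else gp N N.-1), (gp N k.+1).
split; first by case: ifP => _; apply: In_grid; rewrite ?prednK // ltn_pred.
split; first exact: In_grid.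
have q1 := rr _ kN.
case: ifP => u0.
  have p0 : sval (gp N 0) = 0 by rewrite rr // mul0r.
  rewrite !co_ge ?p0 ?q1; try lra.
have u00 : sval u = 0 by move: u0 => /negbT; rewrite -leNgt => *; lra.
have pN : sval (gp N N.-1) = 1 - r.
  have hN1 : (N.-1 < N)%nat by rewrite ltn_predL.
  have e : N%:R = N.-1%:R + 1 :> R by rewrite -{1}(prednK N0) -addn1 natrD.
  rewrite rr // ; move: Nr; rewrite e mulrDl mul1r; lra.
have hu : sval u < sval (gp N N.-1) by rewrite pN; lra.
have hq : sval (gp N k.+1) < sval (gp N N.-1) by rewrite pN q1; lra.
have hv : sval v < sval (gp N N.-1) by rewrite pN; lra.
rewrite (co_lt hu) (co_lt hq) (co_lt hv) pN q1.
apply/andP; split; lra.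
Qed.

Lemma grid_sep N eps u v : 0 < eps -> (0 < N)%nat -> 1 < N%:R * eps ->
  eps <= dS u v ->
  exists p q, List.In p (grid N) /\ List.In q (grid N) /\
    ((co p u < co p q < co p v) \/ (co p v < co p q < co p u)).
Proof.
move=> e0 N0 Ne huv.
case: (ltgtP (sval u) (sval v)) => h.
- have [p [q [? [? ?]]]] := grid_sep_ord e0 N0 Ne huv h.
  by exists p, q; do 2 split => //; left.
- rewrite dS_sym in huv.
  have [p [q [? [? ?]]]] := grid_sep_ord e0 N0 Ne huv h.
  by exists p, q; do 2 split => //; right.
- have uv : u = v by apply: val_inj.
  by move: huv; rewrite uv dS_xx; lra.
Qed.

Lemma cont_epsdelta (F : R -> R) :
  (forall x e, 0 < e -> exists2 d, 0 < d & forall y, `|x - y| < d -> `|F x - F y| < e) ->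
  continuous F.
Proof.
move=> H x; apply/(@pseudometric_normed_Zmodule.cvgrPdist_lt _ R^o) => e e0.
have [d d0 Hd] := H x e e0.
by apply/nbhs_ballP; exists d.
Qed.

Definition clamp (lo hi t : R) : R := Num.max lo (Num.min t hi).

Lemma clampP lo hi t : lo <= hi ->
  lo <= clamp lo hi t <= hi /\ (lo <= t <= hi -> clamp lo hi t = t).
Proof.
move=> lh; rewrite /clamp; case: (leP t hi) => th.
- case: (leP lo t) => lt.
  + by rewrite lt th.
  + rewrite lexx lh; split => // /andP[] ?; lra.
- case: (leP lo hi) => lt.
  + rewrite lh lexx; split => // /andP[] ? ?; lra.
  + lra.
Qed.

Lemma max_lip (lo a b : R) : `|Num.max lo a - Num.max lo b| <= `|a - b|.
Proof.
have h1 := ler_norm (a - b); have h2 := ler_norm (b - a); rewrite distrC in h2.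
rewrite ler_norml; case: (leP lo a) => ?; case: (leP lo b) => ?; apply/andP; split; lra.
Qed.

Lemma min_lip (hi a b : R) : `|Num.min a hi - Num.min b hi| <= `|a - b|.
Proof.
have h1 := ler_norm (a - b); have h2 := ler_norm (b - a); rewrite distrC in h2.
rewrite ler_norml; case: (leP a hi) => ?; case: (leP b hi) => ?; apply/andP; split; lra.
Qed.

Lemma clamp_lip lo hi t t' :
  `|clamp lo hi t - clamp lo hi t'| <= `|t - t'|.
Proof. exact: le_trans (max_lip _ _ _) (min_lip _ _ _). Qed.

Lemma co_gt0 p z : z <> p -> 0 < co p z.
Proof.
move=> zp; rewrite lt0r co_ge0 andbT; apply/eqP => e.
by apply: zp; apply: (@co_inj p); rewrite e co_bb.
Qed.

Lemma separation (h hinv : S1 -> S1) (c p q x y : S1) (delta : R) :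
  cancel h hinv -> cancel hinv h -> S1_continuous hinv -> 0 < delta ->
  dS c (h p) < delta -> dS c (h q) < delta -> delta < dS c x -> delta < dS c y ->
  ~ ((co p (hinv x) < co p q < co p (hinv y)) \/
     (co p (hinv y) < co p q < co p (hinv x))).
Proof.
move=> hK hiK hic d0 hp hq hx hy hord.
pose a := co c x; pose b := co c y.
have a0 : 0 <= a := co_ge0 _ _; have a1 : a < 1 := co_lt1 _ _.
have b0 : 0 <= b := co_ge0 _ _; have b1 : b < 1 := co_lt1 _ _.
rewrite dS_bz -/a in hx; rewrite dS_bz -/b in hy.
pose lo := Num.min a b; pose hi := Num.max a b.
have lohi : (lo = a /\ hi = b) \/ (lo = b /\ hi = a).
  rewrite /lo /hi; case: (leP a b) => _; [left|right]; split => //.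
have lh : lo <= hi by rewrite /lo /hi; case: (leP a b) => ?; lra.
have key : forall t, lo <= t <= hi -> delta < m1 t.
  move=> t /andP[t1 t2]; move: hx hy; rewrite /m1.
  have tt0 : 0 <= t by case: lohi => [[e1 e2]|[e1 e2]]; lra.
  rewrite (ger0_norm a0) (ger0_norm b0) (ger0_norm tt0).
  rewrite !lt_min => /andP[? ?] /andP[? ?].
  by apply/andP; split; case: lohi => [[e1 e2]|[e1 e2]]; lra.
have range : forall t, lo <= t <= hi -> 0 <= t < 1.
  move=> t /andP[t1 t2]; apply/andP; split; case: lohi => [[e1 e2]|[e1 e2]]; lra.
pose g t := hinv (pt c (clamp lo hi t)).
have avoid : forall t z, dS c (h z) < delta -> g t <> z.
  move=> t z hz e; move: hz; rewrite -e /g hiK dS_bz.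
  have [cl _] := clampP t lh.
  rewrite co_pt; last exact: range.
  by move/key: cl; lra.
pose F t := co p (g t).
have Fc : continuous F.
  apply: cont_epsdelta => t0 e e0.
  have w0 : 0 < F t0 by apply: co_gt0; apply: avoid hp.
  have w1 : F t0 < 1 by apply: co_lt1.
  pose eta := Num.min e (Num.min (F t0) (1 - F t0)).
  have eta0 : 0 < eta by rewrite !lt_min e0 w0 /=; lra.
  have [etae etaw] : eta <= e /\ eta <= F t0 /\ eta <= 1 - F t0.
    by rewrite /eta !ge_min !lexx /= ?orbT.
  have [d1 d10 Hd1] := hic (pt c (clamp lo hi t0)) eta eta0.
  exists d1 => // t ht.
  have : dS (g t0) (g t) < eta.
    apply: Hd1; apply: le_lt_trans (dS_pt _ _ _) _.
    - by apply: range; case: (clampP t0 lh).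
    - by apply: range; case: (clampP t lh).
    by apply: le_lt_trans (clamp_lip _ _ _ _) ht.
  move=> hd; have := co_cont eta0 (proj1 etaw) (proj2 etaw) hd.
  rewrite /F; lra.
have Flo : F lo = co p (hinv x) \/ F lo = co p (hinv y).
  rewrite /F /g (proj2 (clampP lo lh)); last by rewrite lexx lh.
  by case: lohi => [[-> _]|[-> _]]; [left|right]; rewrite /a /b pt_co.
have Fhi : (F lo = co p (hinv x) /\ F hi = co p (hinv y)) \/
           (F lo = co p (hinv y) /\ F hi = co p (hinv x)).
  rewrite /F /g (proj2 (clampP lo lh)); last by rewrite lexx lh.
  rewrite (proj2 (clampP hi lh)); last by rewrite lexx lh.
  by case: lohi => [[-> ->]|[-> ->]]; [left|right]; rewrite /a /b !pt_co.
have Fcw : {within `[lo, hi], continuous F} by apply: continuous_subspaceT.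
have mm : Num.min (F lo) (F hi) <= co p q <= Num.max (F lo) (F hi).
  rewrite ge_min !le_max.
  case: Fhi => [[-> ->]|[-> ->]]; case: hord => /andP[h1 h2];
    apply/andP; split; apply/orP;
    solve [left; exact: ltW | right; exact: ltW].
have [t tin Ft] := @IVT _ F lo hi (co p q) lh Fcw mm.
apply: (avoid t q hq).
by apply: (@co_inj p).
Qed.


Lemma cvg_epsN (u : nat -> R) (l : R) : u @ \oo --> l ->
  forall e, 0 < e -> exists N, forall n, (N <= n)%nat -> `|l - u n| < e.
Proof.
move=> /(@pseudometric_normed_Zmodule.cvgrPdist_lt _ R^o) H e e0.
have [N _ HN] := H e e0.
by exists N => n hn; apply: HN.
Qed.

Lemma epsN_cvg (u : nat -> R) (l : R) :
  (forall e, 0 < e -> exists N, forall n, (N <= n)%nat -> `|l - u n| < e) ->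
  u @ \oo --> l.
Proof.
move=> H; apply/(@pseudometric_normed_Zmodule.cvgrPdist_lt _ R^o) => e e0.
have [N HN] := H e e0.
by exists N.
Qed.

Lemma incr_ge (f : nat -> nat) : {mono f : n m / (n <= m)%nat >-> (n <= m)%O} ->
  forall n, (n <= f n)%nat.
Proof.
move=> /increasing_seqP H; elim => [|n IH] //.
by apply: leq_ltn_trans IH _; apply: H.
Qed.

Lemma S1_compact (w : nat -> S1) : exists (phi : nat -> nat) (c : S1),
  (forall n, (n <= phi n)%nat) /\
  forall e, 0 < e -> exists N, forall n, (N <= n)%nat -> dS (w (phi n)) c < e.
Proof.
have := @bolzano_weierstrass R (fun n => sval (w n)).
case.
  exists 1; split; first by rewrite num_real.
  move=> r r1 n _ /=; rewrite ger0_norm ?S1_ge0 //.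
  by apply: ltW; apply: lt_le_trans (S1_lt1 _) (ltW r1).
move=> f finc /cvg_ex [l fl].
have H := cvg_epsN fl.
have l0 : 0 <= l.
  rewrite leNgt; apply/negP => ln.
  have [N HN] := H (- l) (ltac:(lra)).
  have := HN N (leqnn N); have := S1_ge0 (w (f N)) => /= h1.
  rewrite ltr0_norm; last lra.
  lra.
have l1 : l <= 1.
  rewrite leNgt; apply/negP => ln.
  have [N HN] := H (l - 1) (ltac:(lra)).
  have := HN N (leqnn N); have := S1_lt1 (w (f N)) => /= h1.
  rewrite ger0_norm; last lra.
  lra.
exists f, (insubd s0 l); split; first exact: incr_ge.
move=> e e0; have [N HN] := H e e0; exists N => n hn.
have := HN n hn => /= h.
case: (ltP l 1) => l1'.
  apply: le_lt_trans (dS_le_abs _ _) _.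
  by rewrite val_insubd l0 l1' /= distrC.
have l11 : l = 1 by lra.
rewrite dSE val_insubd (_ : (0 <= l) && (l < 1) = false); last by rewrite ltNge l1' andbF.
rewrite /= subr0.
have := S1_ge0 (w (f n)) => h0.
have [_ [_ hm]] := m1P0 h0.
move: h; rewrite l11 ger0_norm; last by have := S1_lt1 (w (f n)); lra.
lra.
Qed.

Lemma multi_compact (S : seq S1) (g : nat -> S1 -> S1) :
  exists (phi : nat -> nat) (lim : S1 -> S1), (forall n, (n <= phi n)%nat) /\
  forall p, List.In p S -> forall e, 0 < e ->
    exists N, forall n, (N <= n)%nat -> dS (g (phi n) p) (lim p) < e.
Proof.
elim: S => [|a S [phi [lim [phige H]]]].
  by exists id, id; split.
have [psi [c [psige Hc]]] := S1_compact (fun n => g (phi n) a).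
exists (phi \o psi), (fun q => if pselect (q = a) then c else lim q); split.
  by move=> n /=; apply: leq_trans (psige n) (phige _).
move=> p /= hp e e0.
case: (pselect (p = a)) => [pa|pa] /=.
  by rewrite pa; apply: Hc.
have hS : List.In p S by case: hp => // ap; case: pa.
have [N HN] := H p hS e e0.
by exists N => n hn; apply: HN; apply: leq_trans hn (psige n).
Qed.

Lemma fin_delta (S : seq S1) (P : S1 -> R -> Prop) :
  (forall p d d', 0 < d' -> d' <= d -> P p d -> P p d') ->
  (forall p, List.In p S -> exists2 d, 0 < d & P p d) ->
  exists2 d, 0 < d & forall p, List.In p S -> P p d.
Proof.
move=> mono; elim: S => [|a S IH] H.
  by exists 1 => //; rewrite ltr01.
have [d1 d10 H1] := H a (or_introl erefl).
have [d2 d20 H2] := IH (fun p hp => H p (or_intror hp)).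
exists (Num.min d1 d2); first by rewrite lt_min d10 d20.
move=> p /= [<-|hp].
  by apply: mono H1; rewrite ?lt_min ?d10 ?d20 // ge_min lexx.
by apply: mono (H2 p hp); rewrite ?lt_min ?d10 ?d20 // ge_min lexx orbT.
Qed.

Lemma fin_N (S : seq S1) (Q : S1 -> nat -> Prop) :
  (forall p, List.In p S -> exists N, forall n, (N <= n)%nat -> Q p n) ->
  exists N, forall p, List.In p S -> forall n, (N <= n)%nat -> Q p n.
Proof.
elim: S => [|a S IH] H; first by exists 0%nat.
have [N1 H1] := H a (or_introl erefl).
have [N2 H2] := IH (fun p hp => H p (or_intror hp)).
exists (maxn N1 N2) => p /= [<-|hp] n hn.
  by apply: H1; apply: leq_trans hn; rewrite leq_maxl.
by apply: H2 => //; apply: leq_trans hn; rewrite leq_maxr.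
Qed.

Lemma In_map (T U : Type) (f : T -> U) (x : T) (s : seq T) :
  List.In x s -> List.In (f x) (map f s).
Proof. by elim: s => //= a s IH [->|h]; [left|right; apply: IH]. Qed.

Section Dyn.
Variable G : (S1 -> S1) -> Prop.
Hypothesis Gcomp : forall f g, G f -> G g -> G (f \o g).
Hypothesis Gcont : forall f, G f -> S1_continuous f.
Hypothesis Ginv : forall f, G f ->
  exists finv, [/\ cancel f finv, cancel finv f & S1_continuous finv].
Hypothesis Gprox : proximal G.
Hypothesis Gfix : fixes_no_point G.

Lemma prox_epsN x y : exists g : nat -> (S1 -> S1), (forall n, G (g n)) /\
  forall e, 0 < e -> exists N, forall n, (N <= n)%nat -> dS (g n x) (g n y) < e.
Proof.
have [g [Gg cv]] := Gprox x y.
exists g; split => // e e0; have [N HN] := cvg_epsN cv e0.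
by exists N => n hn; move: (HN n hn); rewrite sub0r normrN ger0_norm // dS_ge0.
Qed.

Lemma G_nonempty : exists f, G f.
Proof. by have [g [Gg _]] := prox_epsN s0 s0; exists (g 0%nat). Qed.

Lemma FC (n : nat) (S : seq S1) : (size S <= n)%nat ->
  exists c, forall eta, 0 < eta -> exists h, G h /\
    forall p, List.In p S -> dS (h p) c < eta.
Proof.
elim: n S => [|n IH] S.
  case: S => // _; exists s0 => eta _; have [f Gf] := G_nonempty; by exists f.
case: S => [|a [|b R]] hs.
- exists s0 => eta _; have [f Gf] := G_nonempty; by exists f.
- have [f Gf] := G_nonempty; exists (f a) => eta eta0; exists f; split => //.
  by move=> p [<-|[]]; rewrite dS_xx.
have [g [Gg gab]] := prox_epsN a b.
have [phi [lim [phige Hlim]]] := multi_compact (a :: R) g.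
have hT : (size (lim a :: map lim R) <= n)%nat by rewrite /= size_map; move: hs => /=.
have [c Hc] := IH _ hT.
exists c => eta eta0.
have eta2 : 0 < eta / 2 by rewrite divr_gt0.
have [h [Gh Hh]] := Hc _ eta2.
have [d d0 Hd] := @fin_delta (lim a :: map lim R)
   (fun t d => forall z, dS t z < d -> dS (h t) (h z) < eta / 2)
   (fun p d d' d'0 dd H z hz => H z (lt_le_trans hz dd))
   (fun p _ => Gcont Gh p eta2).
have d2 : 0 < d / 2 by rewrite divr_gt0.
have [N1 HN1] := @fin_N (a :: R)
   (fun p n => dS (g (phi n) p) (lim p) < d / 2)
   (fun p hp => Hlim p hp _ d2).
have [N2 HN2] := gab _ d2.
pose N := maxn N1 N2.
have hN1 : (N1 <= N)%nat by rewrite leq_maxl.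
have hN2 : (N2 <= phi N)%nat by apply: leq_trans (phige N); rewrite leq_maxr.
exists (h \o g (phi N)); split; first by apply: Gcomp.
have gen : forall p t, List.In t (lim a :: map lim R) -> dS (g (phi N) p) t < d ->
    dS ((h \o g (phi N)) p) c < eta.
  move=> p t ht hpt /=.
  apply: le_lt_trans (dS_triangle _ (h t) _) _.
  have := Hh t ht; have := Hd t ht _ (ltac:(by rewrite dS_sym; exact: hpt)).
  rewrite dS_sym => *; lra.
move=> p /= [<-|[<-|hp]].
- apply: (gen a (lim a)); first by left.
  have := HN1 a (or_introl erefl) N hN1; lra.
- apply: (gen b (lim a)); first by left.
  apply: le_lt_trans (dS_triangle _ (g (phi N) a) _) _.
  rewrite (dS_sym _ (g (phi N) a)).
  have := HN1 a (or_introl erefl) N hN1; have := HN2 _ hN2; lra.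
- apply: (gen p (lim p)); first by right; apply: In_map.
  have := HN1 p (or_intror hp) N hN1; lra.
Qed.

Lemma dS_pos x y : x <> y -> 0 < dS x y.
Proof.
move=> xy; rewrite lt0r dS_ge0 andbT; apply/eqP => e; apply: xy; exact: dS_eq0.
Qed.

Lemma move_away x y c : x <> y ->
  exists k, (k = id \/ G k) /\ k c <> x /\ k c <> y.
Proof.
move=> xy.
have [z [k [Gk [zxy kz]]]] : exists z k, G k /\ (z = x \/ z = y) /\
    (k z <> x /\ k z <> y).
  apply: NNPP => hn.
  have H : forall k z, G k -> (z = x \/ z = y) -> k z = x \/ k z = y.
    move=> k z Gk hz; apply: NNPP => hn2; apply: hn; exists z, k; split => //.
    split => //; split => e; apply: hn2; [left|right] => //.
  have [g [Gg cv]] := prox_epsN x y.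
  have [N HN] := cv _ (dS_pos xy).
  have hinj : g N x <> g N y.
    have [gi [gK _ _]] := Ginv (Gg N).
    by move=> e; apply: xy; rewrite -(gK x) e gK.
  case: (H _ x (Gg N) (or_introl erefl)) => e1;
  case: (H _ y (Gg N) (or_intror erefl)) => e2;
  move: (HN N (leqnn N)); rewrite e1 e2.
  - by move=> _; apply: hinj; rewrite e1 e2.
  - by rewrite ltxx.
  - by rewrite dS_sym ltxx.
  - by move=> _; apply: hinj; rewrite e1 e2.
case: (pselect (c = x \/ c = y)) => hc; last first.
  by exists id; split; [left|split => e; apply: hc; [left|right]].
case: (pselect (c = z)) => cz.
  by exists k; split; [right|rewrite cz].
have [m Gm mc] : exists2 m, G m & m c <> c.
  apply: NNPP => hn; apply: Gfix; exists c => f Gf.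
  by apply: NNPP => hf; apply: hn; exists f.
case: (pselect (m c = x \/ m c = y)) => hmc; last first.
  by exists m; split; [right|split => e; apply: hmc; [left|right]].
have mcz : m c = z.
  case: hc => hc; case: hmc => hmc; case: zxy => hz; subst;
    solve [by [] | exfalso; apply: mc; congruence | exfalso; apply: cz; congruence].
exists (k \o m); split; first by right; apply: Gcomp.
by rewrite /= mcz.
Qed.

Lemma core x y eps : 0 < eps -> exists g, G g /\
  forall ginv, cancel g ginv -> cancel ginv g -> dS (ginv x) (ginv y) < eps.
Proof.
move=> e0.
case: (pselect (x = y)) => [<-|xy].
  have [f Gf] := G_nonempty; exists f; split => // ? _ _; by rewrite dS_xx.
pose N := (Num.truncn eps^-1).+1.
have N0 : (0 < N)%nat by [].
have Ne : 1 < N%:R * eps.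
  have h := Num.Theory.truncnS_gt eps^-1.
  have : eps^-1 * eps < N%:R * eps by rewrite ltr_pM2r.
  by rewrite mulVf // gt_eqF.
have [c Hc] := @FC N (grid N) ltac:(by rewrite size_map size_iota).
have [k [hk [kx ky]]] := move_away c xy.
have Hc' : forall eta, 0 < eta -> exists h, G h /\
    forall p, List.In p (grid N) -> dS (h p) (k c) < eta.
  case: hk => [->|Gk]; first exact: Hc.
  move=> eta eta0; have [d d0 Hd] := Gcont Gk c eta0.
  have [h [Gh Hh]] := Hc d d0.
  exists (k \o h); split; first exact: Gcomp.
  by move=> p hp /=; rewrite dS_sym; apply: Hd; rewrite dS_sym; apply: Hh.
pose c' := k c.
have cx : 0 < dS c' x by apply: dS_pos.
have cy : 0 < dS c' y by apply: dS_pos.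
pose delta := Num.min (dS c' x) (dS c' y) / 2.
have d0 : 0 < delta by rewrite divr_gt0 // lt_min cx cy.
have dx : delta < dS c' x.
  have : Num.min (dS c' x) (dS c' y) <= dS c' x by rewrite ge_min lexx.
  rewrite /delta; have : 0 < Num.min (dS c' x) (dS c' y) by rewrite lt_min cx cy.
  lra.
have dy : delta < dS c' y.
  have : Num.min (dS c' x) (dS c' y) <= dS c' y by rewrite ge_min lexx orbT.
  rewrite /delta; have : 0 < Num.min (dS c' x) (dS c' y) by rewrite lt_min cx cy.
  lra.
have [h [Gh Hh]] := Hc' delta d0.
have [hinv [hK hiK hic]] := Ginv Gh.
exists h; split => // ginv gK' giK'.
have eg : forall z, ginv z = hinv z.
  by move=> z; rewrite -{2}(giK' z) hK.
rewrite !eg ltNge; apply/negP => hge.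
have [p [q [hp [hq ord]]]] := grid_sep e0 N0 Ne hge.
apply: (@separation h hinv c' p q x y delta hK hiK hic d0 _ _ dx dy ord).
- by rewrite dS_sym; apply: Hh.
- by rewrite dS_sym; apply: Hh.
Qed.

End Dyn.


Definition sH (a b : S1 -> S1) : R := sup (range (fun x => dS (a x) (b x))).

Lemma sH_has_sup (a b : S1 -> S1) : has_sup (range (fun x => dS (a x) (b x))).
Proof.
split; first by exists (dS (a s0) (b s0)), s0.
by exists (1/2) => r [x _ <-]; apply: dS_le_half.
Qed.

Lemma sH_ub (a b : S1 -> S1) x : dS (a x) (b x) <= sH a b.
Proof. by apply: sup_upper_bound (sH_has_sup a b) _ _; exists x. Qed.

Lemma sH_le (a b : S1 -> S1) M : (forall x, dS (a x) (b x) <= M) -> sH a b <= M.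
Proof.
move=> H; apply: ge_sup; first by exists (dS (a s0) (b s0)), s0.
by move=> r [x _ <-]; apply: H.
Qed.

Lemma sH_tri (a b c : S1 -> S1) : sH a c <= sH a b + sH b c.
Proof.
apply: sH_le => x; apply: le_trans (dS_triangle _ (b x) _) _.
by apply: lerD; apply: sH_ub.
Qed.

Lemma dH_tri f g h : dH f h <= dH f g + dH g h.
Proof.
have := sH_tri (hfun f) (hfun g) (hfun h); have := sH_tri (hinv f) (hinv g) (hinv h).
rewrite /dH /sH !RplusE; lra.
Qed.

Lemma ball_open f e : Hom_open (Hom_ball f e).
Proof.
move=> g hg; exists (e - dH f g); first by rewrite /Hom_ball /= in hg; lra.
move=> k; rewrite /Hom_ball /= => hk.
have := dH_tri f g k; lra.
Qed.

Lemma ball_meas f e : measurable (Hom_ball f e : set HomB).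
Proof. by apply: sub_sigma_algebra; apply: ball_open. Qed.

Lemma Hom_invK f : Hom_inverse (Hom_inverse f) = f.
Proof. by case: f. Qed.

Lemma preim_ball f e :
  Hom_inverse @^-1` (Hom_ball f e) = Hom_ball (Hom_inverse f) e.
Proof.
apply/seteqP; split => g; rewrite /Hom_ball /preimage /= /dH /= !RplusE addrC //.
Qed.

Lemma supp_inv (nu nu_inv : probability HomB R)
  (Hinv : forall A : set HomB, measurable A ->
            nu_inv A = nu (Hom_inverse @^-1` A)) f :
  top_support nu_inv f <-> top_support nu (Hom_inverse f).
Proof.
have E : forall e, nu_inv (Hom_ball f e) = nu (Hom_ball (Hom_inverse f) e).
  by move=> e; rewrite -preim_ball; apply: Hinv; apply: ball_meas.
rewrite /top_support; split => H e e0; move: (H e e0) => h.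
  have h' : (0 < nu_inv (Hom_ball f e))%E := h.
  by rewrite E in h'.
have h' : (0 < nu (Hom_ball (Hom_inverse f) e))%E := h.
by rewrite -E in h'.
Qed.

Lemma S1_cont_comp f g : S1_continuous f -> S1_continuous g -> S1_continuous (f \o g).
Proof.
move=> cf cg x e e0; have [d d0 Hd] := cf (g x) e e0.
have [d' d0' Hd'] := cg x d d0.
by exists d' => // y hy /=; apply: Hd; apply: Hd'.
Qed.

Lemma gen_cont X g : gen_semigroup X g -> S1_continuous g.
Proof.
elim => [f _|g1 g2 _ c1 _ c2]; first exact: hfun_cont.
exact: S1_cont_comp.
Qed.

Lemma gen_inv (X Y : set Defs.Hom) : (forall f, X f -> Y (Hom_inverse f)) ->
  forall g, gen_semigroup X g ->
  exists g', [/\ gen_semigroup Y g', cancel g g' & cancel g' g].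
Proof.
move=> XY g; elim => [f Xf|g1 g2 _ [g1' [G1 K1 K1']] _ [g2' [G2 K2 K2']]].
  exists (hinv f); split; [|exact: hfunK|exact: hinvK].
  by apply: (gs_gen (f := Hom_inverse f)); apply: XY.
exists (g2' \o g1'); split; first exact: gs_comp.
  by move=> z /=; rewrite K1 K2.
by move=> z /=; rewrite K2' K1'.
Qed.

Lemma inv_lt (n : nat) (e : R) : 0 < e -> (Num.truncn e^-1 <= n)%nat -> (n.+1%:R)^-1 < e.
Proof.
move=> e0 hn.
have h1 := Num.Theory.truncnS_gt e^-1.
have h2 : (Num.truncn e^-1).+1%:R <= n.+1%:R :> R by rewrite ler_nat.
have h3 : e^-1 < n.+1%:R by apply: lt_le_trans h1 h2.
rewrite -(invrK e) ltf_pV2 ?posrE ?invr_gt0 //.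
Qed.

Unset Implicit Arguments.

Theorem proposition3p4
  (nu nu_inv : probability HomB R)
  (Hinv : forall A : set HomB, measurable A ->
            nu_inv A = nu (Hom_inverse @^-1` A))
  (Hprox : proximal (gen_semigroup (top_support nu)))
  (Hfix : fixes_no_point (gen_semigroup (top_support nu))) :
  proximal (gen_semigroup (top_support nu_inv)) /\
  fixes_no_point (gen_semigroup (top_support nu_inv)).
Proof.
pose G := gen_semigroup (top_support nu).
pose Y := gen_semigroup (top_support nu_inv).
have XY : forall f, top_support nu f -> top_support nu_inv (Hom_inverse f).
  by move=> f hf; apply/(supp_inv Hinv); rewrite Hom_invK.
have Ginv := gen_inv XY.
have Gcomp : forall f g, G f -> G g -> G (f \o g) by move=> f g; exact: gs_comp.
have Gcont : forall f, G f -> S1_continuous f by move=> f; exact: gen_cont.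
have Ginv' : forall f, G f ->
    exists finv, [/\ cancel f finv, cancel finv f & S1_continuous finv].
  move=> f Gf; have [f' [Yf' K1 K2]] := Ginv f Gf.
  by exists f'; split => //; apply: gen_cont Yf'.
split.
- move=> x y.
  have H : forall n : nat, exists g', Y g' /\ dS (g' x) (g' y) < (n.+1%:R)^-1.
    move=> n.
    have [g [Gg Hg]] := core Gcomp Gcont Ginv' Hprox Hfix x y
      (ltac:(by rewrite invr_gt0 ltr0n) : 0 < (n.+1%:R : R)^-1).
    have [g' [Yg' K1 K2]] := Ginv g Gg.
    by exists g'; split => //; apply: Hg.
  have [s Hs] := choice H.
  exists s; split; first by move=> n; case: (Hs n).
  apply: epsN_cvg => e e0; exists (Num.truncn e^-1) => n hn.
  rewrite sub0r normrN ger0_norm ?dS_ge0 //.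
  by apply: lt_trans (proj2 (Hs n)) (inv_lt e0 hn).
- move=> [x Hx]; apply: Hfix; exists x => f Gf.
  have [f' [Yf' K1 K2]] := Ginv f Gf.
  by rewrite -{1}(Hx f' Yf') K2.
Qed.
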